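(* Let $k$ be a field and $d,m$ integers with $d\ge 3$, $m\ge 3d-2$ and $(m-1)!\ne 0$ in $k$. Let $Y\subseteq k$ be a subset of cardinality $d$ such that the set of differences $Y-Y=\{y_1-y_2: y_1,y_2\in Y\}$ has cardinality $1+2\binom d2$. Let $V\subseteq k[\beta]$ be the $k$-subspace containing $(\beta^m)$ with $V/(\beta^m)=\sum_{y\in Y}k\,(e^{y\beta}\bmod\beta^m)$. Then there is no nonzero differential operator $\Theta=A(\beta)+B(\beta)\frac{d}{d\beta}$ with $A,B\in(\beta)$ (i.e. $A(0)=B(0)=0$) and $\deg A,\deg B<m$ such that $\Theta(V)\subseteq V$.
   Context: $k[\beta]$ is the polynomial ring; $e^{y\beta}\bmod\beta^m$ denotes the class of $\sum_{\nu=0}^{m-1}\frac{y^\nu}{\nu!}\beta^\nu$ in $k[\beta]/(\beta^m)$. A differential operator $A+B\frac{d}{d\beta}$ acts on $k[\beta]$ by $v\mapsto Av+Bv'$. *)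

(* Defs.v *)
From HB Require Import structures.
From mathcomp Require Import all_boot all_order all_algebra.
Set Implicit Arguments. Unset Strict Implicit. Unset Printing Implicit Defensive.
Import GRing.Theory.
Local Open Scope ring_scope.

(* e^{y beta} mod beta^m, represented by its canonical truncation of degree < m *)
Definition expTrunc (k : fieldType) (m : nat) (y : k) : {poly k} :=
  \sum_(i < m) ((y ^+ i) / (i`!)%:R) *: 'X^i.

Definition inV (k : fieldType) (m : nat) (Y : seq k) (v : {poly k}) : Prop :=
  exists (c : k -> k) (q : {poly k}),
    v = \sum_(y <- Y) c y *: expTrunc m y + q * 'X^m.

Definition diffOp (k : fieldType) (A B v : {poly k}) : {poly k} :=
  A * v + B * v^`().

(* Main.v *)
Require Import Defs.
From mathcomp Require Import all_boot all_order all_algebra.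
From mathcomp Require Import ring zify.
Import GRing.Theory.
Local Open Scope ring_scope.

Section Aux.
Context {k : fieldType}.

Lemma fact_nz (n j : nat) : (j <= n)%N -> (n`!)%:R != 0 :> k -> (j`!)%:R != 0 :> k.
Proof.
elim: n => [|n IH]; first by rewrite leqn0 => /eqP ->.
rewrite leq_eqVlt => /orP [/eqP -> //| hj] hn.
apply: IH => //; move: hn; rewrite factS natrM mulf_eq0 negb_or => /andP [] //.
Qed.

Lemma coefE (m : nat) (y : k) (j : nat) :
  (expTrunc m y)`_j = if (j < m)%N then y ^+ j / (j`!)%:R else 0.
Proof.
rewrite /expTrunc coef_sum.
case: ifP => hj.
  rewrite (bigD1 (Ordinal hj)) //= coefZ coefXn eqxx mulr1 big1 ?addr0 //.
  move=> i /eqP hi; rewrite coefZ coefXn; case: eqP; last by rewrite mulr0.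
  by move=> e; exfalso; apply: hi; apply: val_inj => /=.
rewrite big1 // => i _; rewrite coefZ coefXn; case: eqP; last by rewrite mulr0.
by move=> e; move: (ltn_ord i); rewrite -e hj.
Qed.

Definition eqm (m : nat) (p q : {poly k}) := forall j, (j < m)%N -> p`_j = q`_j.

Lemma eqmMr m p q r : eqm m p q -> eqm m (p * r) (q * r).
Proof.
move=> h j hj; rewrite !coefM; apply: eq_bigr => i _; rewrite h //.
by apply: leq_ltn_trans hj; rewrite -ltnS.
Qed.

Lemma expTruncM (m : nat) (a b : k) : ((m.-1)`!)%:R != 0 :> k ->
  eqm m (expTrunc m a * expTrunc m b) (expTrunc m (a + b)).
Proof.
move=> hf j hj; rewrite coefM coefE hj.
have fz : forall i, (i <= j)%N -> (i`!)%:R != 0 :> k.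
  move=> i hi; apply: (@fact_nz m.-1) => //; lia.
rewrite addrC exprDn mulr_suml; apply: eq_bigr => [[i hi]] _ /=.
rewrite !coefE (leq_ltn_trans _ hj) ?leq_subr // (leq_ltn_trans _ hj) //.
have hfj : (j`!)%:R = ('C(j, i) * (i`! * (j - i)`!))%:R :> k by rewrite bin_fact.
have h1 := fz i hi. have h2 := fz (j - i)%N (leq_subr _ _).
rewrite hfj !natrM -mulr_natr. field.
rewrite h1 h2 /=. 
have := fz j (leqnn j); rewrite hfj !natrM !mulf_eq0 !negb_or => /andP [-> _] //.
exact: leq_subr.
Qed.

Lemma eqmMl m p q r : eqm m p q -> eqm m (r * p) (r * q).
Proof. by move=> h; rewrite ![r * _]mulrC; apply: eqmMr. Qed.

Lemma expTrunc0 m : (0 < m)%N -> expTrunc m (0 : k) = 1.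
Proof.
move=> hm; apply/polyP => j; rewrite coefE coefC.
case: j => [|j]; first by rewrite hm expr0 fact0 divr1.
by rewrite expr0n /= mul0r; case: ifP.
Qed.

Lemma derivE (m : nat) (y : k) (B : {poly k}) : ((m.-1)`!)%:R != 0 :> k ->
  B`_0 = 0 -> eqm m (B * (expTrunc m y)^`()) (B * (y *: expTrunc m y)).
Proof.
move=> hf hB j hj; rewrite !coefM !big_ord_recl hB !mul0r !add0r.
apply: eq_bigr => [[i hi]] _ /=; congr (_ * _).
rewrite coef_deriv coefZ !coefE.
have hl : (j - bump 0 i < m.-1)%N by rewrite /bump /=; lia.
have -> : ((j - bump 0 i).+1 < m)%N by lia.
have -> : (j - bump 0 i < m)%N by lia.
set l := (j - bump 0 i)%N in hl *.
have h1 : ((l.+1)`!)%:R != 0 :> k by apply: (@fact_nz m.-1).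
have h2 : ((l)`!)%:R != 0 :> k by apply: (@fact_nz m.-1) => //; lia.
move: h1; rewrite factS natrM mulf_eq0 negb_or => /andP [h3 _].
rewrite -mulr_natr exprS; field.
by rewrite h2 addrC natr1.
Qed.

Lemma step (m : nat) (Y : seq k) (A B q : {poly k}) (c : k -> k) (y : k) :
  ((m.-1)`!)%:R != 0 :> k -> (0 < m)%N -> B`_0 = 0 ->
  diffOp A B (expTrunc m y) = \sum_(z <- Y) c z *: expTrunc m z + q * 'X^m ->
  forall j, (j < m)%N ->
    (A + y *: B)`_j = \sum_(z <- Y) c z * ((z - y) ^+ j / (j`!)%:R).
Proof.
move=> hf hm hB hd.
have h1 : eqm m ((A + y *: B) * expTrunc m y) (\sum_(z <- Y) c z *: expTrunc m z).
  move=> j hj.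
  have := congr1 (fun p : {poly k} => p`_j) hd; rewrite /diffOp /= !coefD coefMXn hj addr0 => <-.
  rewrite mulrDl coefD; congr (_ + _).
  by rewrite (derivE _ _ _ hf hB _ hj) -scalerAl scalerAr.
have h2 := eqmMr _ _ _ (expTrunc m (- y)) h1.
move=> j hj.
have e1 : (A + y *: B)`_j = ((A + y *: B) * expTrunc m y * expTrunc m (- y))`_j.
  rewrite -mulrA (eqmMl _ _ _ (A + y *: B) (expTruncM _ _ _ hf) _ hj) subrr expTrunc0 // mulr1 //.
rewrite e1 (h2 j hj) mulr_suml coef_sum; apply: eq_bigr => z _.
by rewrite -scalerAl coefZ (expTruncM _ _ _ hf _ hj) coefE hj.
Qed.

Lemma uniq_map_inj (T1 T2 : eqType) (f : T1 -> T2) (s : seq T1) x y :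
  uniq (map f s) -> x \in s -> y \in s -> f x = f y -> x = y.
Proof.
elim: s => [//|a s IH] /= /andP [hn hu].
rewrite !in_cons => /orP [/eqP -> | hx] /orP [/eqP -> | hy] // hf.
- by move: hn; rewrite hf (map_f f hy).
- by move: hn; rewrite -hf (map_f f hx).
- exact: IH.
Qed.

Lemma sumn_const (T : Type) (s : seq T) (c : nat) : sumn (map (fun _ => c) s) = (size s * c)%N.
Proof. by elim: s => //= a s ->; rewrite mulSn. Qed.

Lemma twobin2 (d : nat) : (2 * 'C(d, 2))%N = (d * d.-1)%N.
Proof.
elim: d => // d IH; rewrite binS bin1 mulnDr IH /=; case: d {IH} => //= d; lia.
Qed.

Lemma diff_inj (Y : seq k) (d : nat) : uniq Y -> size Y = d ->
  size (undup [seq y1 - y2 | y1 <- Y, y2 <- Y]) = (1 + 2 * 'C(d, 2))%N ->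
  forall a b c e, a \in Y -> b \in Y -> c \in Y -> e \in Y ->
  a != b -> c != e -> a - b = c - e -> a = c /\ b = e.
Proof.
move=> hY hYd hdiff a b c e ha hb hc he hab hce heq.
set T := [seq (x, y) | x <- Y, y <- rem x Y].
set L' := 0 :: [seq p.1 - p.2 | p <- T].
have memT : forall x y, ((x, y) \in T) = [&& x \in Y, y \in Y & y != x].
  move=> x y; apply/allpairsPdep/idP.
    move=> [x' [y' [hx' hy' [-> ->]]]]; rewrite hx' /=.
    by move: hy'; rewrite (mem_rem_uniq _ hY) inE andbC.
  move=> /and3P [hx hy hyx]; exists x, y; split => //.
  by rewrite (mem_rem_uniq _ hY) inE hyx.
have sT : size T = (d * d.-1)%N.
  rewrite size_allpairs_dep.
  have -> : [seq size (rem x Y) | x <- Y] = [seq d.-1 | x <- Y].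
    by apply/eq_in_map => x hx /=; rewrite size_rem // hYd.
  by rewrite sumn_const hYd.
have uL' : uniq L'.
  apply: (leq_size_uniq (undup_uniq [seq y1 - y2 | y1 <- Y, y2 <- Y])).
    move=> x; rewrite mem_undup => /allpairsP [[x1 x2] [h1 h2 ->]] /=.
    rewrite in_cons; case: (eqVneq x1 x2) => [-> | hne]; first by rewrite subrr eqxx.
    apply/orP; right; apply/mapP; exists (x1, x2) => //.
    by rewrite memT h1 h2 eq_sym hne.
  by rewrite hdiff /= size_map sT twobin2.
move: uL' => /= /andP [_ hu].
have := @uniq_map_inj _ _ (fun p : k * k => p.1 - p.2) _ (a, b) (c, e) hu.
rewrite !memT ha hb hc he eq_sym hab eq_sym hce /= => /(_ isT isT heq) [-> ->] //.
Qed.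

Lemma getc (m : nat) (Y : seq k) (A B : {poly k}) (y : k) :
  uniq Y -> ((m.-1)`!)%:R != 0 :> k -> (0 < m)%N -> B`_0 = 0 ->
  (forall v, inV m Y v -> inV m Y (diffOp A B v)) -> y \in Y ->
  exists c : k -> k, forall j, (j < m)%N ->
    (A + y *: B)`_j = (\sum_(z <- Y) c z * (z - y) ^+ j) / (j`!)%:R.
Proof.
move=> hY hf hm hB hinv hy.
have hv : inV m Y (expTrunc m y).
  exists (fun z => (z == y)%:R), 0; rewrite mul0r addr0.
  rewrite (bigD1_seq y hy hY) /= eqxx scale1r big1 ?addr0 //.
  by move=> z /negbTE ->; rewrite scale0r.
have [c [q hq]] := hinv _ hv.
exists c => j hj; rewrite (step _ _ _ _ _ _ _ hf hm hB hq _ hj) mulr_suml.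
by apply: eq_bigr => z _; rewrite mulrA.
Qed.

Lemma evalH (m : nat) (P : {poly k}) (Y : seq k) (c : k -> k) (y : k) :
  (size P <= m)%N ->
  \sum_(j < m) P`_j * (\sum_(z <- Y) c z * (z - y) ^+ j)
  = \sum_(z <- Y) c z * P.[z - y].
Proof.
move=> hP.
have -> : \sum_(j < m) P`_j * (\sum_(z <- Y) c z * (z - y) ^+ j)
  = \sum_(j < m) \sum_(z <- Y) c z * (P`_j * (z - y) ^+ j).
  apply: eq_bigr => j _; rewrite mulr_sumr; apply: eq_bigr => z _.
  by rewrite mulrCA.
rewrite exchange_big /=; apply: eq_bigr => z _.
by rewrite (horner_coef_wide _ hP) mulr_sumr.
Qed.

Lemma arith1 (e : nat) : (e + (e + (e + 0))).+1 = (1 + 3 * e)%N.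
Proof. lia. Qed.
Lemma arith2 (a b s d m : nat) : (0 < b)%N -> (a + b)%N = s -> s = (1 + 3 * d.-1)%N ->
      (3 * d - 2 <= m)%N -> (1 < d)%N -> (a.+1 <= m)%N.
Proof. lia. Qed.

Lemma core (m d : nat) (Y : seq k) (A B : {poly k}) (y1 y2 y3 : k) :
  uniq Y -> size Y = d -> (3 * d - 2 <= m)%N -> ((m.-1)`!)%:R != 0 :> k ->
  size (undup [seq a - b | a <- Y, b <- Y]) = (1 + 2 * 'C(d, 2))%N ->
  A`_0 = 0 -> B`_0 = 0 ->
  (forall v, inV m Y v -> inV m Y (diffOp A B v)) ->
  y1 \in Y -> y2 \in Y -> y3 \in Y -> y1 != y2 -> y1 != y3 -> y2 != y3 ->
  forall j, (j < m)%N -> (A + y1 *: B)`_j = 0.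
Proof.
move=> hY hYd hm hf hdiff hA hB hinv h1 h2 h3 n12 n13 n23.
have d1 : (1 < d)%N.
  rewrite -hYd; apply: (@leq_trans (size [:: y1; y2])) => //.
  apply: uniq_leq_size; first by rewrite /= inE n12.
  by move=> x; rewrite !inE => /orP [/eqP -> | /eqP ->].
have hm0 : (0 < m)%N by lia.
have [c1 e1] := getc _ _ _ _ _ hY hf hm0 hB hinv h1.
have [c2 e2] := getc _ _ _ _ _ hY hf hm0 hB hinv h2.
have [c3 e3] := getc _ _ _ _ _ hY hf hm0 hB hinv h3.
set H := fun (c : k -> k) (y : k) (j : nat) => \sum_(z <- Y) c z * (z - y) ^+ j.
have rel : forall j, (j < m)%N ->
    (y2 - y3) * H c1 y1 j + (y3 - y1) * H c2 y2 j + (y1 - y2) * H c3 y3 j = 0.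
  move=> j hj.
  have fj : (j`!)%:R != 0 :> k by apply: (@fact_nz m.-1) => //; lia.
  have := e1 _ hj; have := e2 _ hj; have := e3 _ hj.
  rewrite !coefD !coefZ => E3 E2 E1.
  have : ((y2 - y3) * H c1 y1 j + (y3 - y1) * H c2 y2 j + (y1 - y2) * H c3 y3 j)
     / (j`!)%:R = 0.
    rewrite !mulrDl -!mulrA -/(H c1 y1 j) -/(H c2 y2 j) -/(H c3 y3 j).
    rewrite /H -E1 -E2 -E3; ring.
  by move/eqP; rewrite mulf_eq0 invr_eq0 (negbTE fj) orbF => /eqP.
have van : forall z0, z0 \in Y -> z0 != y1 -> c1 z0 = 0.
  move=> z0 hz0 nz0.
  set x0 := z0 - y1.
  set S := 0 :: [seq z - y | y <- [:: y1; y2; y3], z <- rem y Y].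
  have memS : forall y z, y \in [:: y1; y2; y3] -> z \in Y -> z - y \in S.
    move=> y z hy hz; rewrite in_cons; case: (eqVneq z y) => [-> | hzy].
      by rewrite subrr eqxx.
    apply/orP; right; apply/allpairsPdep; exists y, z; split => //.
    by rewrite (mem_rem_uniq _ hY) inE hzy.
  have x0S : x0 \in S by apply: memS; rewrite ?inE ?eqxx.
  have x0n0 : x0 != 0 by rewrite subr_eq0.
  set P := \prod_(x <- S | x != x0) ('X - x%:P).
  have eP : P = \prod_(x <- [seq x <- S | x != x0]) ('X - x%:P) by rewrite big_filter.
  have Proot : forall x, x \in S -> x != x0 -> P.[x] = 0.
    move=> x hx hne; apply/eqP; rewrite -/(root P x) eP root_prod_XsubC.
    by rewrite mem_filter hne hx.
  have Pnz : P.[x0] != 0.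
    by rewrite -/(root P x0) eP root_prod_XsubC mem_filter eqxx.
  have sS : size S = (1 + 3 * d.-1)%N.
    rewrite /S /= !size_cat !size_map !size_rem // hYd.
    set u := size _; have -> : u = 0%N by []. exact: arith1.
  have sP : (size P <= m)%N.
    rewrite eP size_prod_XsubC size_filter.
    have := count_predC (fun x => x != x0) S.
    have : (0 < count (predC (fun x => x != x0)) S)%N.
      by rewrite -has_count; apply/hasP; exists x0 => //=; rewrite eqxx.
    rewrite sS; move: (count _ S) (count _ S) => a1 a2 q0 q1.
    exact: arith2 q0 q1 erefl hm d1.
  have key : \sum_(j < m) P`_j * ((y2 - y3) * H c1 y1 j + (y3 - y1) * H c2 y2 j
       + (y1 - y2) * H c3 y3 j) = 0.
    by rewrite big1 // => j _; rewrite rel // mulr0.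
  move: key; rewrite (eq_bigr (fun j : 'I_m => (y2 - y3) * (P`_j * H c1 y1 j)
       + (y3 - y1) * (P`_j * H c2 y2 j) + (y1 - y2) * (P`_j * H c3 y3 j))); last first.
    by move=> j _; ring.
  rewrite !big_split /= -!mulr_sumr /H !evalH //.
  have T2 : forall (c : k -> k) y, y \in [:: y1; y2; y3] -> y != y1 ->
      \sum_(z <- Y) c z * P.[z - y] = 0.
    move=> c y hy ny; rewrite big1_seq // => z /andP [_ hz].
    rewrite Proot ?mulr0 //; first by apply: memS.
    apply/eqP => ez.
    case: (eqVneq z y) => [ezy | nzy].
      by move: ez; rewrite ezy subrr => /esym/eqP; rewrite subr_eq0 (negbTE nz0).
    have yY : y \in Y by move: hy; rewrite !inE => /or3P [] /eqP ->.
    have [_ ey] := diff_inj _ _ hY hYd hdiff _ _ _ _ hz yY hz0 h1 nzy nz0 ez.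
    by move: ny; rewrite ey eqxx.
  rewrite (T2 c2 y2) ?inE ?eqxx ?orbT 1?eq_sym // (T2 c3 y3) ?inE ?eqxx ?orbT 1?eq_sym //.
  rewrite !mulr0 !addr0 (bigD1_seq z0 hz0 hY) /= big1_seq ?addr0.
    move/eqP; rewrite !mulf_eq0 subr_eq0 (negbTE n23) (negbTE Pnz) orbF /=.
    by move/eqP.
  move=> z /andP [nz hz]; rewrite Proot ?mulr0 //.
    by apply: memS; rewrite ?inE ?eqxx.
  by rewrite /x0; apply: contra nz => /eqP/addIr/eqP.
have c1y1 : c1 y1 = 0.
  have := e1 _ hm0; rewrite coefD coefZ hA hB mulr0 addr0 fact0 divr1.
  rewrite (bigD1_seq y1 h1 hY) /= big1_seq ?addr0.
    by rewrite expr0 mulr1 => <-.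
  by move=> z /andP [nz hz]; rewrite van // mul0r.
move=> j hj; rewrite e1 // big1_seq ?mul0r // => z /andP [_ hz].
case: (eqVneq z y1) => [-> | nz]; first by rewrite c1y1 mul0r.
by rewrite van // mul0r.
Qed.
End Aux.

Theorem mainTheorem13 (k : fieldType) (d m : nat) (Y : seq k)
  (hd : (3 <= d)%N) (hm : (3 * d - 2 <= m)%N)
  (hfact : ((m.-1)`!)%:R != 0 :> k)
  (hY : uniq Y) (hYd : size Y = d)
  (hdiff : size (undup [seq y1 - y2 | y1 <- Y, y2 <- Y]) = (1 + 2 * 'C(d, 2))%N) :
  ~ (exists A B : {poly k},
        ((A != 0) || (B != 0)) /\
        A`_0 = 0 /\ B`_0 = 0 /\
        (size A <= m)%N /\ (size B <= m)%N /\
        (forall v, inV m Y v -> inV m Y (diffOp A B v))).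
Proof.
move=> [A [B [hnz [hA [hB [sA [sB hinv]]]]]]].
case: Y hY hYd hdiff hinv => [|a [|b [|c Y']]] hY hYd hdiff hinv;
  try by (move: hd; rewrite -hYd).
have hu := hY; move: hu => /= /andP [ha /andP [hb _]].
move: ha hb; rewrite !inE !negb_or => /andP [nab /andP [nac _]] /andP [nbc _].
have ha : a \in [:: a, b, c & Y'] by rewrite !inE eqxx.
have hb : b \in [:: a, b, c & Y'] by rewrite !inE eqxx orbT.
have hc : c \in [:: a, b, c & Y'] by rewrite !inE eqxx !orbT.
have nba : b != a by rewrite eq_sym.
have Ea := core _ _ _ _ _ _ _ _ hY hYd hm hfact hdiff hA hB hinv ha hb hc nab nac nbc.
have Eb := core _ _ _ _ _ _ _ _ hY hYd hm hfact hdiff hA hB hinv hb ha hc nba nbc nac.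
have hB0 : B = 0.
  apply/polyP => j; rewrite coefC; case: eqP => [-> | _]; first by rewrite hB.
  case: (ltnP j m) => hj; last by rewrite nth_default //; apply: leq_trans sB hj.
  have := Ea _ hj; have := Eb _ hj; rewrite !coefD !coefZ => e2 e1.
  have : (a - b) * B`_j = 0 by rewrite mulrBl -[a * _](addKr A`_j) e1 -(addKr A`_j (b * _)) e2; ring.
  by move/eqP; rewrite mulf_eq0 subr_eq0 (negbTE nab) /= => /eqP.
have hA0 : A = 0.
  apply/polyP => j; rewrite coefC; case: eqP => [-> | _]; first by rewrite hA.
  case: (ltnP j m) => hj; last by rewrite nth_default //; apply: leq_trans sA hj.
  have := Ea _ hj; rewrite coefD coefZ hB0 coefC; case: ifP => _; rewrite mulr0 addr0 //.
by move: hnz; rewrite hA0 hB0 eqxx.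
Qed.
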